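(* Let $n\ge 4$ and let $\mathcal{G}=\{G_1,\ldots,G_n\}$ be a family of graphs on the same vertex set of size $n$, where $G_i\cong K_1\vee(K_{n-2}\cup K_1)$ for every $i$. Then $\mathcal{G}$ admits a rainbow Hamiltonian cycle unless $G_1=G_2=\cdots=G_n$.
   Context: $K_1\vee(K_{n-2}\cup K_1)$ is $K_{n-1}$ plus one pendant vertex adjacent to one vertex of the $K_{n-1}$. $G_i=G_j$ means equal edge sets on the common vertex set. A rainbow Hamiltonian cycle in $\mathcal{G}$ is a Hamiltonian cycle on the common vertex set whose $n$ edges can be labeled $e_1,\ldots,e_n$ with $e_i\in E(G_i)$ for each $i$. *)

(* Defs.v *)
From mathcomp Require Import all_boot all_fingroup.
Set Implicit Arguments. Unset Strict Implicit. Unset Printing Implicit Defensive.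

Definition is_graph (n : nat) (E : {set {set 'I_n}}) : Prop :=
  forall e, e \in E -> #|e| = 2.

Definition edge (n : nat) (x y : 'I_n) : {set 'I_n} := [set x; y].

Definition graph_iso (n : nat) (E F : {set {set 'I_n}}) : Prop :=
  exists p : {perm 'I_n}, forall x y : 'I_n, x != y ->
    (edge x y \in E) = (edge (p x) (p y) \in F).

(* K_1 v (K_{n-2} u K_1): vertex 0 is the pendant vertex, vertex 1 its unique
   neighbour; vertices 1..n-1 form a clique K_{n-1}. *)
Definition pendant_clique (n : nat) : {set {set 'I_n}} :=
  [set e : {set 'I_n} | [exists x : 'I_n, exists y : 'I_n,
     [&& x != y, e == edge x y &
         ((0 < val x) && (0 < val y)) || ((val x == 0) && (val y == 1))]]].

Definition cnext (n : nat) (i : 'I_n) : 'I_n := ordS i.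

(* A rainbow Hamiltonian cycle of the family G : 'I_n -> graphs: a cyclic
   ordering s of all n vertices (Hamiltonian cycle s_0 s_1 ... s_{n-1} s_0)
   and a bijection c from the n cycle edges to the n graphs such that the
   i-th cycle edge {s_i, s_{i+1}} belongs to G_(c i). *)
Definition rainbow_ham_cycle (n : nat) (G : 'I_n -> {set {set 'I_n}}) : Prop :=
  exists (s : {perm 'I_n}) (c : {perm 'I_n}),
    forall i : 'I_n, edge (s i) (s (cnext i)) \in G (c i).

(* Main.v *)
Require Import Defs.
From mathcomp Require Import all_boot all_fingroup.
From mathcomp Require Import zify.
Set Implicit Arguments. Unset Strict Implicit. Unset Printing Implicit Defensive.

Lemma perm_extend (T : finType) (f : T -> T) (D : {set T}) :
  {in D &, injective f} -> exists p : {perm T}, {in D, forall x, p x = f x}.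
Proof.
move: {2}#|D| (erefl #|D|) => k; elim: k D => [|k IH] D hD finj.
  by exists 1%g => x; move/eqP: hD; rewrite cards_eq0 => /eqP ->; rewrite inE.
have [x xD] : exists x, x \in D.
  by apply/set0Pn; rewrite -card_gt0 hD.
have hD' : #|D :\ x| = k by rewrite (cardsD1 x D) xD in hD; case: hD.
have [p hp] := IH (D :\ x) hD' (sub_in2 (fun y => @subsetP _ _ _ (subsetDl D [set x]) y) finj).
exists (p * tperm (p x) (f x))%g => y yD; rewrite permM.
case: (eqVneq y x) => [->|yx]; first by rewrite tpermL.
have yD' : y \in D :\ x by rewrite !inE yx.
rewrite (hp y yD') tpermD //.
  by rewrite -(hp y yD') (inj_eq perm_inj) eq_sym.
idtac.
apply: contra_neq yx => h; apply: finj => //; by rewrite h.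
Qed.
Lemma set2_eq (T : finType) (x y x' y' : T) : x != y ->
  [set x; y] = [set x'; y'] -> (x = x' /\ y = y') \/ (x = y' /\ y = x').
Proof.
move=> nxy e.
have hx : x \in [set x'; y'] by rewrite -e !inE eqxx.
have hy : y \in [set x'; y'] by rewrite -e !inE eqxx orbT.
move: hx hy; rewrite !inE => /orP [] /eqP hx /orP [] /eqP hy.
- by move: nxy; rewrite hx hy eqxx.
- by left.
- by right.
- by move: nxy; rewrite hx hy eqxx.
Qed.

Lemma pc_edge n (x y : 'I_n) : x != y ->
  (edge x y \in pendant_clique n) =
  [|| (0 < val x) && (0 < val y), (val x == 0) && (val y == 1) |
      (val x == 1) && (val y == 0)].
Proof.
move=> nxy; rewrite inE; apply/existsP/idP.
  case=> x' /existsP [y' /and3P [nxy' /eqP e h]].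
  case: (set2_eq nxy e) => [[-> ->]|[-> ->]]; first by case/orP: h => ->; rewrite ?orbT.
  move: h => /orP [/andP [h1 h2]|/andP [h1 h2]]; first by rewrite h1 h2.
  by rewrite h1 h2 !orbT.
case/or3P => h.
- by exists x; apply/existsP; exists y; rewrite nxy eqxx h.
- by exists x; apply/existsP; exists y; rewrite nxy eqxx h orbT.
- exists y; apply/existsP; exists x; rewrite eq_sym nxy /edge setUC eqxx.
  by case/andP: h => -> ->; rewrite orbT.
Qed.

Definition good n (a b x y : 'I_n) : bool :=
  [|| (x != a) && (y != a), (x == a) && (y == b) | (x == b) && (y == a)].

Lemma permEV (T : finType) (p : {perm T}) x z : (p x == z) = (x == p^-1%g z).
Proof. by rewrite -{1}(permKV p z) (inj_eq perm_inj). Qed.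

Lemma G_char m (E : {set {set 'I_m.+4}}) : graph_iso E (pendant_clique m.+4) ->
  exists ab : 'I_m.+4 * 'I_m.+4, ab.1 != ab.2 /\
    forall x y, x != y -> (edge x y \in E) = good ab.1 ab.2 x y.
Proof.
case=> p hp.
exists (p^-1%g ord0, p^-1%g (inord 1)); split.
  by rewrite /= (inj_eq perm_inj) -val_eqE /= inordK.
move=> x y nxy; rewrite hp // pc_edge; last by rewrite (inj_eq perm_inj).
have e0 v : (val v == 0) = (v == ord0 :> 'I_m.+4) by [].
have e1 v : (val v == 1) = (v == inord 1 :> 'I_m.+4) by rewrite -val_eqE /= inordK.
rewrite /good /= !lt0n !e0 !e1 !permEV.
done.
Qed.

Lemma perm_extend_seq (T : finType) (s t : seq T) :
  uniq s -> uniq t -> size s = size t ->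
  exists p : {perm T}, forall x0 i, i < size s -> p (nth x0 s i) = nth x0 t i.
Proof.
move=> us ut hst.
case: s us hst => [|x1 s'] us hst.
  by exists 1%g => x0 i.
pose f x := nth x1 t (index x (x1 :: s')).
have [|p hp] := @perm_extend T f [set x in x1 :: s'].
  move=> x y; rewrite !inE => hx hy; rewrite /f => e.
  have: index x (x1 :: s') = index y (x1 :: s').
    by apply/eqP; rewrite -(nth_uniq x1 _ _ ut) -?hst ?index_mem // e.
  by move=> /(congr1 (nth x1 (x1 :: s'))); rewrite !nth_index.
exists p => x0 i hi; rewrite hp; last by rewrite inE mem_nth.
by rewrite /f index_uniq // (set_nth_default x1) // -hst.
Qed.

Section Pos.
Variable m : nat.
Definition Lp : 'I_m.+4 := ord_max.
Definition Pp : 'I_m.+4 := inord m.+2.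
Definition Op : 'I_m.+4 := inord 1.
Definition Zp : 'I_m.+4 := ord0.

Lemma vP : val Pp = m.+2. Proof. by rewrite /= inordK. Qed.
Lemma vO : val Op = 1. Proof. by rewrite /= inordK. Qed.
Lemma vL : val Lp = m.+3. Proof. by []. Qed.
Lemma vZ : val Zp = 0. Proof. by []. Qed.

Lemma cnext_P : cnext Pp = Lp.
Proof. by apply: val_inj; rewrite /= inordK // modn_small. Qed.
Lemma cnext_L : cnext Lp = Zp.
Proof. by apply: val_inj; rewrite /= modnn. Qed.
Lemma cnext_eqL k : (cnext k == Lp) = (k == Pp).
Proof. by rewrite -cnext_P (inj_eq (@ordS_inj _)). Qed.
Lemma val_cnext (k : 'I_m.+4) : k != Lp -> val (cnext k) = k.+1.
Proof.
move=> kL; rewrite /= modn_small //.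
have := ltn_ord k; rewrite ltnS leq_eqVlt => /orP [/eqP e|//].
by move: kL; rewrite -val_eqE /= e eqxx.
Qed.

Definition Sol (a b : 'I_m.+4 -> 'I_m.+4) :=
  exists g q : {perm 'I_m.+4}, forall k,
    good (a (g k)) (b (g k)) (q^-1%g k) (q^-1%g (cnext k)).

Lemma invE (q : {perm 'I_m.+4}) z a : (q^-1%g z == a) = (z == q a).
Proof. by rewrite permEV invgK. Qed.

Lemma goodI (q : {perm 'I_m.+4}) a b k : q a != k -> q a != cnext k ->
  good a b (q^-1%g k) (q^-1%g (cnext k)).
Proof. by move=> h1 h2; rewrite /good !invE ![_ == q a]eq_sym h1 h2. Qed.

Lemma goodA2 (q : {perm 'I_m.+4}) a b k : q a = k -> q b = cnext k ->
  good a b (q^-1%g k) (q^-1%g (cnext k)).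
Proof. by move=> <- <-; rewrite /good !permK !eqxx !orbT. Qed.

Lemma goodA3 (q : {perm 'I_m.+4}) a b k : q b = k -> q a = cnext k ->
  good a b (q^-1%g k) (q^-1%g (cnext k)).
Proof. by move=> <- <-; rewrite /good !permK !eqxx !orbT. Qed.

Lemma caseA (a b : 'I_m.+4 -> 'I_m.+4) v i j :
  (forall k, a k = v) -> (forall k, a k != b k) -> b i != b j -> Sol a b.
Proof.
move=> hv ab bij.
have ij : i != j by apply: contra_neq bij => ->.
have [|||g hg] := @perm_extend_seq _ [:: Pp; Lp] [:: i; j] => //.
  by rewrite /= inE andbT -val_eqE vP vL; lia.
  by rewrite /= inE andbT.
have := hg Pp 0 isT; have := hg Pp 1 isT => /= gL gP.
have biv k : b k != v by rewrite -(hv k) eq_sym.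
have [|||q hq] := @perm_extend_seq _ [:: v; b i; b j] [:: Lp; Pp; Zp] => //.
  by rewrite /= !inE !negb_or andbT ![v == _]eq_sym !biv.
  by rewrite /= !inE !negb_or andbT -!val_eqE vP vL vZ; lia.
have := hq v 0 isT; have := hq v 1 isT; have := hq v 2 isT => /= qbj qbi qv.
exists g, q => k.
case: (eqVneq k Lp) => [->|kL].
  by rewrite gL hv; apply: goodA2; rewrite ?qv ?qbj ?cnext_L.
case: (eqVneq k Pp) => [->|kP].
  by rewrite gP hv; apply: goodA3; rewrite ?qv ?qbi ?cnext_P.
rewrite hv; apply: goodI; rewrite qv; first by rewrite eq_sym.
by rewrite eq_sym cnext_eqL.
Qed.

Lemma caseB (a b : 'I_m.+4 -> 'I_m.+4) v w j i0 :
  (forall k, k != j -> a k = v) -> a j = w -> w != v -> i0 != j ->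
  (forall k, a k != b k) -> Sol a b.
Proof.
move=> hv hj wv i0j ab.
have [|||g hg] := @perm_extend_seq _ [:: Pp; Lp] [:: i0; j] => //.
  by rewrite /= inE andbT -val_eqE vP vL; lia.
  by rewrite /= inE andbT.
have := hg Pp 0 isT; have := hg Pp 1 isT => /= gL gP.
have bv : b i0 != v by rewrite -(hv i0 i0j) eq_sym.
have [q [qv [qb [qw1 qw2]]]] : exists q : {perm 'I_m.+4},
    [/\ q v = Lp, q (b i0) = Pp, q w != Lp & q w != Zp].
  case: (eqVneq (b i0) w) => [bw|bw].
    have [|||q hq] := @perm_extend_seq _ [:: v; w] [:: Lp; Pp] => //.
      by rewrite /= inE andbT eq_sym.
      by rewrite /= inE andbT -val_eqE vP vL; lia.
    have := hq v 0 isT; have := hq v 1 isT => /= qw qv.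
    exists q; rewrite bw qv qw; split => //; rewrite -val_eqE ?vP ?vL ?vZ; lia.
  have [|||q hq] := @perm_extend_seq _ [:: v; b i0; w] [:: Lp; Pp; Op] => //.
    by rewrite /= !inE !negb_or andbT bw ![v == _]eq_sym bv wv.
    by rewrite /= !inE !negb_or andbT -!val_eqE vP vL vO; lia.
  have := hq v 0 isT; have := hq v 1 isT; have := hq v 2 isT => /= qw qb qv.
  exists q; rewrite qb qv qw; split => //; rewrite -val_eqE ?vO ?vL ?vZ; lia.
exists g, q => k.
case: (eqVneq k Lp) => [->|kL].
  by rewrite gL hj; apply: goodI; rewrite ?cnext_L.
case: (eqVneq k Pp) => [->|kP].
  by rewrite gP (hv _ i0j); apply: goodA3; rewrite ?qv ?qb ?cnext_P.
have gkj : g k != j by rewrite -gL (inj_eq perm_inj).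
rewrite (hv _ gkj); apply: goodI; rewrite qv; first by rewrite eq_sym.
by rewrite eq_sym cnext_eqL.
Qed.

Lemma caseC (a b : 'I_m.+4 -> 'I_m.+4) x0 x1 z y :
  uniq [:: x0; x1; z; y] -> a y != a x0 -> a y != a x1 -> a z != a x0 ->
  Sol a b.
Proof.
move=> u yx0 yx1 zx0.
have [|||g hg] := @perm_extend_seq _ [:: Zp; Op; Pp; Lp] [:: x0; x1; z; y] => //.
  by rewrite /= !inE !negb_or -!val_eqE vP vL vO vZ; lia.
have := hg Pp 0 isT; have := hg Pp 1 isT; have := hg Pp 2 isT;
  have := hg Pp 3 isT => /= gL gP gO gZ.
pose Ls := [seq a (g k) | k <- enum 'I_m.+4].
have sLs : size Ls = m.+4 by rewrite size_map size_enum_ord.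
have nthLs (k : 'I_m.+4) : nth Zp Ls k = a (g k).
  by rewrite (nth_map Zp) ?size_enum_ord // nth_ord_enum.
pose fq v : 'I_m.+4 := inord (if index v Ls == 0 then m.+3 else (index v Ls).-1).
have vfq v : v \in Ls -> val (fq v) = if index v Ls == 0 then m.+3 else (index v Ls).-1.
  move=> vL; rewrite /fq /= inordK //; case: ifP => // _.
  by have := index_mem v Ls; rewrite vL sLs => h; lia.
have [|q hq] := @perm_extend _ fq [set v | v \in Ls].
  move=> v1 v2; rewrite !inE => h1 h2 e.
  have := congr1 val e; rewrite !vfq // => e'.
  have ei : index v1 Ls = index v2 Ls.
    have := index_mem v1 Ls; have := index_mem v2 Ls; rewrite h1 h2 sLs.
    move: e'; case: (index v1 Ls) => [|i1]; case: (index v2 Ls) => [|i2] /=; lia.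
  by rewrite -(nth_index Zp h1) -(nth_index Zp h2) ei.
exists g, q => k.
set v := a (g k).
have vin : v \in Ls by rewrite /v -nthLs mem_nth // sLs.
have ik : index v Ls <= k by rewrite /v -nthLs index_nth // sLs.
have vq : val (q v) = if index v Ls == 0 then m.+3 else (index v Ls).-1.
  by rewrite hq ?inE // vfq.
have nthv : nth Zp Ls (index v Ls) = v by rewrite nth_index.
apply: goodI.
  rewrite -val_eqE vq /=; case: ifP => [/eqP i0|]; last by move=> /negbT; lia.
  case: (eqVneq k Lp) => [kL|]; last by rewrite -val_eqE vL /=; lia.
  by move: nthv; rewrite i0 /v kL (nthLs Zp) gZ gL => /eqP; rewrite eq_sym (negbTE yx0).
case: (eqVneq k Lp) => [kL|kL].
  rewrite kL cnext_L -val_eqE vq vZ; case: ifP => [//|/negbT i0].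
  case: (eqVneq (index v Ls) 1) => [i1|]; last by lia.
  by move: nthv; rewrite i1; have := nthLs Op; rewrite vO => ->; rewrite /v kL gO gL => /eqP; rewrite eq_sym (negbTE yx1).
rewrite -val_eqE vq val_cnext //; case: ifP => [/eqP i0|]; last by lia.
have kP : k != Pp.
  apply: contra_neq zx0 => kP.
  by move: nthv; rewrite i0 /v kP (nthLs Zp) gZ gP.
have := ltn_ord k; move: kL kP; rewrite -!val_eqE vL vP /=; lia.
Qed.
End Pos.

Lemma cnext_neq m (k : 'I_m.+4) : k != cnext k.
Proof.
case: (eqVneq k (Lp m)) => [->|kL]; first by rewrite cnext_L -val_eqE.
by rewrite -val_eqE val_cnext //=; lia.
Qed.

Lemma comb m (a b : 'I_m.+4 -> 'I_m.+4) : (forall k, a k != b k) ->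
  ~ (forall i j, a i = a j /\ b i = b j) -> Sol a b.
Proof.
move=> ab hne.
case: (boolP [forall i, a i == a ord0]) => [/forallP hall | /forallPn [j hj]].
  case: (boolP [exists i, exists j, b i != b j]) => [/existsP [i /existsP [j bij]]|hb].
    by apply: (@caseA m a b (a ord0) i j) => // k; apply/eqP.
  exfalso; apply: hne => i j; split; first by rewrite (eqP (hall i)) (eqP (hall j)).
  apply/eqP; move: hb => /existsPn /(_ i) /existsPn /(_ j); by rewrite negbK.
have j0 : j != ord0 by apply: contra_neq hj => ->.
case: (boolP [exists k, (a k != a ord0) && (a k != a j)]) => [/existsP [k /andP [k1 k2]] | hno].
  have [l hl] : exists l : 'I_m.+4, l \notin [:: ord0; j; k].
    case: (boolP [exists l, l \notin [:: ord0; j; k]]) => [/existsP //|/existsPn h].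
    have : #|'I_m.+4| <= #|[:: ord0; j; k]|.
      by apply: subset_leq_card; apply/subsetP => x _; have := h x; rewrite negbK.
    by rewrite card_ord => h'; have := card_size [:: ord0; j; k]; rewrite /= => h''; have := leq_trans h' h''.
  move: hl; rewrite !inE !negb_or => /and3P [l0 lj lk].
  have k0 : k != ord0 by apply: contra_neq k1 => ->.
  have kj : k != j by apply: contra_neq k2 => ->.
  case: (eqVneq (a l) (a ord0)) => [hl0|hl0].
    apply: (@caseC m a b j ord0 l k) => //; last by rewrite hl0 eq_sym.
    by rewrite /= !inE !negb_or j0 ![j == _]eq_sym lj kj eq_sym l0 eq_sym k0 lk.
  apply: (@caseC m a b ord0 j l k) => //.
  by rewrite /= !inE !negb_or ![ord0 == _]eq_sym j0 l0 k0 eq_sym lj eq_sym kj lk.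
have hno' k : (a k == a ord0) || (a k == a j).
  by move: hno => /existsPn /(_ k); rewrite negb_and !negbK.
case: (boolP [exists k, (k != ord0) && (a k == a ord0)]) => [/existsP [k /andP [k0 /eqP hk]] | h1].
  case: (boolP [exists l, (l != j) && (a l == a j)]) => [/existsP [l /andP [lj /eqP hl]] | h2].
    apply: (@caseC m a b ord0 k l j); rewrite ?hk ?hl //.
    have kl : k != l by apply: contra_neq hj => e; rewrite -hk e hl.
    have l0 : l != ord0 by apply: contra_neq hj => e; rewrite -hl e.
    have kj : k != j by apply: contra_neq hj => e; rewrite -hk e.
    by rewrite /= !inE !negb_or ![ord0 == _]eq_sym k0 l0 j0 kl kj lj.
  apply: (@caseB m a b (a ord0) (a j) j ord0) => //; last by rewrite eq_sym.
  move=> k' kj; have := hno' k'; case/orP => /eqP // hk'.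
  by move: h2 => /existsPn /(_ k'); rewrite kj hk' eqxx.
apply: (@caseB m a b (a j) (a ord0) ord0 j) => //; last by rewrite eq_sym.
move=> k k0; have := hno' k; case/orP => /eqP // hk.
by move: h1 => /existsPn /(_ k); rewrite k0 hk eqxx.
Qed.

Theorem mainTheorem4 (n : nat) (G : 'I_n -> {set {set 'I_n}}) :
  4 <= n ->
  (forall i, is_graph (G i)) ->
  (forall i, graph_iso (G i) (pendant_clique n)) ->
  ~ (forall i j, G i = G j) ->
  rainbow_ham_cycle G.
Proof.
case: n G => [|[|[|[|m]]]] G // _ hg hiso hne.
have /fin_all_exists [ab hab] := fun i => G_char (hiso i).
have [|g [q hq]] := @comb m (fun i => (ab i).1) (fun i => (ab i).2)
  (fun i => (hab i).1) _.
  move=> hall; apply: hne => i j.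
  have key x y : x != y -> (edge x y \in G i) = (edge x y \in G j).
    by move=> nxy; rewrite (hab i).2 // (hab j).2 // (hall i j).1 (hall i j).2.
  apply/setP => e; apply/idP/idP => he.
    have /eqP/cards2P [x [y [nxy exy]]] := hg i e he.
    by move: he; rewrite exy -[[set x; y]]/(edge x y) key.
  have /eqP/cards2P [x [y [nxy exy]]] := hg j e he.
  by move: he; rewrite exy -[[set x; y]]/(edge x y) key.
exists (q^-1)%g, g => k.
rewrite (hab (g k)).2; first exact: hq.
by rewrite (inj_eq perm_inj) cnext_neq.
Qed.
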